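(* Let $\wp$ be a behavioral quantifier prefix with pairwise distinct propositions and let $\Psi\subseteq\mathrm{Asg}(\mathrm{ap}(\wp))$ be Borelian. Then the quantification game $\mathcal G_{\wp,\Psi}$ satisfies: (1) if Eloise wins $\mathcal G_{\wp,\Psi}$, then there exists $E\in\mathrm{evl}_{\exists\forall}(C_{\forall\exists}(\wp))$ with $E\subseteq\Psi$; (2) if Abelard wins $\mathcal G_{\wp,\Psi}$, then $E\not\subseteq\Psi$ for every $E\in\mathrm{evl}_{\exists\forall}(C_{\exists\forall}(\wp))$.
   Context: Let $AP$ be a set of atomic propositions and $\mathbb B=\{\top,\bot\}$. A temporal valuation is a function $f:\mathbb N\to\mathbb B$. An assignment is a partial function $\chi:AP\rightharpoonup(\mathbb N\to\mathbb B)$; $\mathrm{Asg}$ is the set of all assignments, $\mathrm{Asg}(P)$ the set of assignments with domain exactly $P\subseteq AP$. For an assignment $\chi$, $p\in AP$ and a temporal valuation $f$, $\chi[p\mapsto f]$ is the assignment that agrees with $\chi$ except that it maps $p$ to $f$. A hyperassignment is a set $\mathcal X$ with $\emptyset\neq\mathcal X\subseteq 2^{\mathrm{Asg}(P)}$ and $\emptyset\notin\mathcal X$, for some $P\subseteq AP$; this $P$ is denoted $\mathrm{ap}(\mathcal X)$. A choice function for $\mathcal X$ is a map $c:\mathcal X\to\mathrm{Asg}$ with $c(X)\in X$ for all $X\in\mathcal X$. The dual of $\mathcal X$ is $\overline{\mathcal X}=\{\mathrm{img}(c): c\text{ a choice function for }\mathcal X\}$. A functor over $P\subseteq AP$ is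 a function $F:\mathrm{Asg}(P)\to(\mathbb N\to\mathbb B)$; $\mathrm{Fnc}(P)$ is the set of all of them. $\mathrm{ext}(\chi,F,p)=\chi[p\mapsto F(\chi)]$ and $\mathrm{ext}(X,F,p)=\{\mathrm{ext}(\chi,F,p):\chi\in X\}$. For $\chi_1,\chi_2\in\mathrm{Asg}(P)$, $p\in P$, $k\in\mathbb N$: $\chi_1\approx^{>k}_p\chi_2$ iff $\chi_1(q)=\chi_2(q)$ for all $q\in P\setminus\{p\}$ and $\chi_1(p)(t)=\chi_2(p)(t)$ for all $t\le k$; $\chi_1\approx^{\ge k}_p\chi_2$ is defined the same way with $t<k$ in place of $t\le k$. $F\in\mathrm{Fnc}(P)$ is behavioral (resp. strongly behavioral) w.r.t. $p\in P$ if $F(\chi_1)(k)=F(\chi_2)(k)$ for all $k\in\mathbb N$ and all $\chi_1,\chi_2$ with $\chi_1\approx^{>k}_p\chi_2$ (resp. $\chi_1\approx^{\ge k}_p\chi_2$). A quantifier specification is a pair $\sigma=\langle P_B,P_S\rangle$ of subsets of $AP$; $\mathrm{Fnc}_\sigma(P)$ is the set of $F\in\mathrm{Fnc}(P)$ that are behavioral w.r.t. every $p\in P_B\cap P$ and strongly behavioral w.r.t. every $p\in P_S\cap P$. $\mathrm{ext}_\sigma(\mathcal X,p)=\{\mathrm{ext}(X,F,p):X\in\mathcal X,\ F\in\mathrm{Fnc}_\sigma(\mathrm{ap}(\mathcal X))\}$. Union of specifications is componentwise. Write $\mathsf B=\langle AP,\emptyset\rangle$. A quantifier prefix is a finite sequence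 $\wp=Q_1^{\sigma_1}p_1\cdots Q_n^{\sigma_n}p_n$ with $Q_i\in\{\exists,\forall\}$; $\mathrm{ap}(\wp)=\{p_1,\dots,p_n\}$, $\epsilon$ is the empty prefix. It is behavioral if every $\sigma_i=\mathsf B$. The quantifier $\exists$ is $\exists\forall$-coherent and $\forall$ is $\forall\exists$-coherent. Evolution: $\mathrm{evl}_\alpha(\mathcal X,Q^\sigma p)=\mathrm{ext}_\sigma(\mathcal X,p)$ if $Q$ is $\alpha$-coherent, and $\overline{\mathrm{ext}_\sigma(\overline{\mathcal X},p)}$ otherwise; $\mathrm{evl}_\alpha(\mathcal X,\epsilon)=\mathcal X$, $\mathrm{evl}_\alpha(\mathcal X,Q^\sigma p.\wp)=\mathrm{evl}_\alpha(\mathrm{evl}_\alpha(\mathcal X,Q^\sigma p),\wp)$, and $\mathrm{evl}_\alpha(\wp)=\mathrm{evl}_\alpha(\{\{\emptyset\}\},\wp)$ with $\emptyset$ the empty assignment. Canonical forms. Every behavioral prefix $\wp$ can be uniquely written as $\exists^{\mathsf B}\vec q_0.\forall^{\mathsf B}\vec p_1.\exists^{\mathsf B}\vec q_1\cdots\forall^{\mathsf B}\vec p_k.\exists^{\mathsf B}\vec q_k.\forall^{\mathsf B}\vec p_{k+1}$ with $k\in\mathbb N$, $\vec q_0,\vec p_{k+1}$ possibly empty and $\vec p_i,\vec q_i$ nonempty for $1\le i\le k$ (where $Q^\sigma\vec p$ quantifies the entries of $\vec p$ in order); then $C_{\exists\forall}(\wp)=\exists^{\mathsf B}\vec q_0\cdots\exists^{\mathsf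 B}\vec q_k.\forall^{\tau_1}\vec p_1\cdots\forall^{\tau_{k+1}}\vec p_{k+1}$ where $\tau_i=\mathsf B\cup\langle\emptyset,\vec q_i\cup\cdots\cup\vec q_k\rangle$ (for $i=k+1$, $\tau_{k+1}=\mathsf B$). Dually, writing $\wp$ uniquely as $\forall^{\mathsf B}\vec p_0.\exists^{\mathsf B}\vec q_1.\forall^{\mathsf B}\vec p_1\cdots\exists^{\mathsf B}\vec q_k.\forall^{\mathsf B}\vec p_k.\exists^{\mathsf B}\vec q_{k+1}$ (with $\vec p_0,\vec q_{k+1}$ possibly empty, the others nonempty), $C_{\forall\exists}(\wp)=\forall^{\mathsf B}\vec p_0\cdots\forall^{\mathsf B}\vec p_k.\exists^{\tau_1}\vec q_1\cdots\exists^{\tau_{k+1}}\vec q_{k+1}$ with $\tau_i=\mathsf B\cup\langle\emptyset,\vec p_i\cup\cdots\cup\vec p_k\rangle$. Words and Borel sets. For finite $P\subseteq AP$, $\mathrm{Val}(P)$ is the set of maps $P\to\mathbb B$; the word function $w:\mathrm{Asg}(P)\to\mathrm{Val}(P)^\omega$, $w(\chi)_t(p)=\chi(p)(t)$, is a bijection. $\Psi\subseteq\mathrm{Asg}(P)$ is Borelian if $w(\Psi)$ is a Borel set in the product (Cantor) topology on $\mathrm{Val}(P)^\omega$. Games. A game consists of disjoint sets of positions of Eloise and Abelard, an initial position, a move relation in which every position has a successor, a set $O$ of observable positions and a winning set $W\subseteq O^\omega$. A history is a finite path from the initial position; a strategy for a player maps each history ending in one of its positions to a successor of that position; a pair of strategies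 induces a unique infinite play; the observation of a play is the sequence of observable positions occurring in it, in order. Eloise wins if she has a strategy such that for every Abelard strategy the observation of the induced play lies in $W$; Abelard wins if he has a strategy such that for every Eloise strategy the observation is not in $W$. Quantification game $\mathcal G_{\wp,\Psi}$ for a behavioral prefix $\wp=Q_1^{\mathsf B}p_1\cdots Q_n^{\mathsf B}p_n$ (distinct $p_i$) and $\Psi\subseteq\mathrm{Asg}(\mathrm{ap}(\wp))$: positions are the valuations $v$ with domain $\{p_1,\dots,p_m\}$ for some $0\le m\le n$ ($m=|\mathrm{dom}(v)|$); $v$ belongs to Eloise iff $m<n$ and $Q_{m+1}=\exists$, otherwise to Abelard; the initial position is the empty valuation; moves go from $v$ with $m<n$ to any extension of $v$ with domain $\{p_1,\dots,p_{m+1}\}$, and from every total valuation ($m=n$) to the empty valuation; the observable positions are the total valuations $\mathrm{Val}(\mathrm{ap}(\wp))$; the winning set is $W=w(\Psi)$. *)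

(* Defs.v *)
From HB Require Import structures.
From mathcomp Require Import all_boot all_order all_algebra.
From mathcomp Require Import all_classical all_reals.
From mathcomp Require Import topology_structure discrete_topology function_spaces.
From mathcomp Require Import measurable_structure.

Local Open Scope classical_set_scope.

Record game := Game {
  gpos : Type;
  gEloise : gpos -> bool;          (* true: position of Eloise; false: of Abelard *)
  ginit : gpos;
  gmove : gpos -> gpos -> Prop;
  gobs : gpos -> Prop;
  gwin : set (nat -> gpos)         (* winning set W, a set of sequences of observable positions *)
}.

Set Implicit Arguments.
Unset Strict Implicit.
Unset Printing Implicit Defensive.

Section Games.
Variable G : game.

Definition history (h : seq (gpos G)) : Prop :=
  h <> [::] /\ head (ginit G) h = ginit G /\
  forall i, i.+1 < size h -> gmove G (nth (ginit G) h i) (nth (ginit G) h i.+1).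

(* A strategy of player [pl] (true = Eloise, false = Abelard). *)
Definition strategy (pl : bool) (s : seq (gpos G) -> gpos G) : Prop :=
  forall h, history h -> gEloise G (last (ginit G) h) = pl ->
    gmove G (last (ginit G) h) (s h).

Fixpoint induced_hist (sE sA : seq (gpos G) -> gpos G) (k : nat) : seq (gpos G) :=
  match k with
  | 0 => [:: ginit G]
  | k'.+1 => let h := induced_hist sE sA k' in
             rcons h (if gEloise G (last (ginit G) h) then sE h else sA h)
  end.

Definition induced_play sE sA : nat -> gpos G :=
  fun k => last (ginit G) (induced_hist sE sA k).

Definition observation (pi : nat -> gpos G) (o : nat -> gpos G) : Prop :=
  exists f : nat -> nat,
    (forall k, f k < f k.+1) /\
    (forall k, gobs G (pi (f k))) /\
    (forall j, gobs G (pi j) -> exists k, f k = j) /\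
    (forall k, o k = pi (f k)).

(* The observation of [pi] lies in W (a finite observation never does). *)
Definition obs_in_W (pi : nat -> gpos G) : Prop :=
  exists o, observation pi o /\ gwin G o.

Definition Eloise_wins : Prop :=
  exists sE, strategy true sE /\
    forall sA, strategy false sA -> obs_in_W (induced_play sE sA).

Definition Abelard_wins : Prop :=
  exists sA, strategy false sA /\
    forall sE, strategy true sE -> ~ obs_in_W (induced_play sE sA).

End Games.

Section QPTL.
Variable AP : eqType.

Definition tval := nat -> bool.
Definition Asg := AP -> option tval.

Definition dom {T : Type} (f : AP -> option T) : set AP := [set p | f p <> None].

Definition AsgP (P : set AP) : set Asg := [set chi | dom chi = P].

Definition empty_asg : Asg := fun _ => None.

Definition upd (chi : Asg) (p : AP) (f : tval) : Asg :=
  fun q => if q == p then Some f else chi q.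

Definition choice_fun (HX : set (set Asg)) (c : set Asg -> Asg) : Prop :=
  forall X, HX X -> X (c X).

Definition dual (HX : set (set Asg)) : set (set Asg) :=
  [set Y | exists c, choice_fun HX c /\ Y = c @` HX].

(* functors (only their values on Asg(P) matter) *)
Definition functor := Asg -> tval.

Definition eq_upto_le (P : set AP) (p : AP) (k : nat) (c1 c2 : Asg) : Prop :=
  (forall q, P q -> q <> p -> c1 q = c2 q) /\
  (forall t, t <= k -> omap (fun f => f t) (c1 p) = omap (fun f => f t) (c2 p)).

Definition eq_upto_lt (P : set AP) (p : AP) (k : nat) (c1 c2 : Asg) : Prop :=
  (forall q, P q -> q <> p -> c1 q = c2 q) /\
  (forall t, t < k -> omap (fun f => f t) (c1 p) = omap (fun f => f t) (c2 p)).

Definition behavioral (P : set AP) (F : functor) (p : AP) : Prop :=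
  forall k c1 c2, AsgP P c1 -> AsgP P c2 -> eq_upto_le P p k c1 c2 -> F c1 k = F c2 k.

Definition strongly_behavioral (P : set AP) (F : functor) (p : AP) : Prop :=
  forall k c1 c2, AsgP P c1 -> AsgP P c2 -> eq_upto_lt P p k c1 c2 -> F c1 k = F c2 k.

(* quantifier specifications <P_B, P_S> *)
Definition spec := (set AP * set AP)%type.
Definition specB : spec := (setT, set0).
Definition spec_union (s1 s2 : spec) : spec := (s1.1 `|` s2.1, s1.2 `|` s2.2).

Definition Fnc_sigma (P : set AP) (sigma : spec) (F : functor) : Prop :=
  (forall p, sigma.1 p -> P p -> behavioral P F p) /\
  (forall p, sigma.2 p -> P p -> strongly_behavioral P F p).

Definition ext_set (X : set Asg) (F : functor) (p : AP) : set Asg :=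
  [set upd chi p (F chi) | chi in X].

(* ext_sigma(HX, p), where P = ap(HX) *)
Definition ext_sigma (P : set AP) (sigma : spec) (HX : set (set Asg)) (p : AP)
  : set (set Asg) :=
  [set Y | exists X F, HX X /\ Fnc_sigma P sigma F /\ Y = ext_set X F p].

Inductive quant := QEx | QAll.
Definition quant_eqb (q1 q2 : quant) : bool :=
  match q1, q2 with QEx, QEx | QAll, QAll => true | _, _ => false end.

Inductive alt := AltEA | AltAE .
Definition coherent (q : quant) (a : alt) : bool :=
  match q, a with QEx, AltEA | QAll, AltAE => true | _, _ => false end.

Record qentry := QE { qq : quant; qs : spec; qp : AP }.
Definition qprefix := seq qentry.

Definition ap (pre : qprefix) : set AP := [set p | p \in map qp pre].

Fixpoint behavioral_prefix (pre : qprefix) : Prop :=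
  match pre with
  | [::] => True
  | e :: r => qs e = specB /\ behavioral_prefix r
  end.

(* one evolution step; P is ap(HX) *)
Definition evl_step (a : alt) (P : set AP) (HX : set (set Asg)) (e : qentry) :=
  if coherent (qq e) a then ext_sigma P (qs e) HX (qp e)
  else dual (ext_sigma P (qs e) (dual HX) (qp e)).

Fixpoint evl_from (a : alt) (P : set AP) (HX : set (set Asg)) (pre : qprefix)
  : set (set Asg) :=
  match pre with
  | [::] => HX
  | e :: pre' => evl_from a (P `|` [set qp e]) (evl_step a P HX e) pre'
  end.

Definition evl (a : alt) (pre : qprefix) : set (set Asg) :=
  evl_from a set0 [set [set empty_asg]] pre.

(* canonical forms: the quantifiers of kind [q1] first (spec B, in order),
   then the others (in order), each getting spec B u <0, {q1-quantified
   propositions occurring after it in pre}> *)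
Definition props_after (q1 : quant) (r : qprefix) : set AP :=
  [set p | p \in [seq qp e | e <- r & quant_eqb (qq e) q1]].

Fixpoint canon_rest (q1 : quant) (pre : qprefix) : qprefix :=
  match pre with
  | [::] => [::]
  | e :: r =>
      if quant_eqb (qq e) q1 then canon_rest q1 r
      else QE (qq e) (spec_union specB (set0, props_after q1 r)) (qp e)
             :: canon_rest q1 r
  end.

Definition canon (q1 : quant) (pre : qprefix) : qprefix :=
  [seq QE q1 specB (qp e) | e <- pre & quant_eqb (qq e) q1] ++ canon_rest q1 pre.

Definition C_EA (pre : qprefix) : qprefix := canon QEx pre.
Definition C_AE (pre : qprefix) : qprefix := canon QAll pre.

Definition valuation := AP -> option bool.

Definition ValP (P : set AP) := {v : valuation | dom v = P}.
HB.instance Definition _ P := gen_eqMixin (ValP P).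
HB.instance Definition _ P := gen_choiceMixin (ValP P).

Definition word (chi : Asg) (t : nat) : valuation :=
  fun p => omap (fun f => f t) (chi p).

Definition words_space (P : set AP) :=
  prod_topology (fun _ : nat => discrete_topology (ValP P)).

Definition word_image (P : set AP) (Psi : set Asg) : set (words_space P) :=
  [set u : words_space P | exists chi, Psi chi /\
      forall t, proj1_sig (u t : ValP P) = word chi t].

Definition Borel_set (T : topologicalType) (A : set T) : Prop :=
  <<s [set: T], @open T >> A.

Definition Borelian (P : set AP) (Psi : set Asg) : Prop :=
  Borel_set (@word_image P Psi).

Definition dom_prefix (pre : qprefix) (m : nat) : set AP :=
  [set p | p \in take m (map qp pre)].

Definition qpos (pre : qprefix) :=
  {v : valuation | exists m, m <= size pre /\ dom v = dom_prefix pre m}.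

Lemma qinit_proof (pre : qprefix) :
  exists m, m <= size pre /\ dom (fun _ : AP => @None bool) = dom_prefix pre m.
Proof.
exists 0; split => //; rewrite /dom /dom_prefix take0.
by apply/seteqP; split => p //=.
Qed.

Definition qinit (pre : qprefix) : qpos pre := exist _ (fun _ => None) (qinit_proof pre).

Definition qEloise (pre : qprefix) (v : qpos pre) : bool :=
  `[< exists m e, dom (proj1_sig v) = dom_prefix pre m /\
        ohead (drop m pre) = Some e /\ qq e = QEx >].

Definition qmove (pre : qprefix) (v v' : qpos pre) : Prop :=
  (exists m, m < size pre /\ dom (proj1_sig v) = dom_prefix pre m /\
     dom (proj1_sig v') = dom_prefix pre m.+1 /\
     (forall p, proj1_sig v p <> None -> proj1_sig v' p = proj1_sig v p))
  \/ (dom (proj1_sig v) = ap pre /\ dom (proj1_sig v') = set0).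

Definition qobs (pre : qprefix) (v : qpos pre) : Prop := dom (proj1_sig v) = ap pre.

Definition qwin (pre : qprefix) (Psi : set Asg) : set (nat -> qpos pre) :=
  [set o | exists chi, Psi chi /\ forall t, proj1_sig (o t) = word chi t].

Definition qgame (pre : qprefix) (Psi : set Asg) : game :=
  @Game (qpos pre) (@qEloise pre) (qinit pre) (@qmove pre) (@qobs pre)
        (@qwin pre Psi).

End QPTL.

(* Main.v *)
Require Import Defs.
From HB Require Import structures.
From mathcomp Require Import all_boot all_order all_algebra.
From mathcomp Require Import all_classical all_reals.
From mathcomp Require Import topology_structure discrete_topology function_spaces.
From mathcomp Require Import measurable_structure.
From mathcomp Require Import zify.
Local Open Scope classical_set_scope.
Set Implicit Arguments.
Unset Strict Implicit.
Unset Printing Implicit Defensive.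

Definition epick {T : Type} (d : T) (P : T -> Prop) : T :=
  match pselect (exists x, P x) with
  | left H => proj1_sig (cid H)
  | right _ => d
  end.

Lemma epickP {T : Type} (d : T) (P : T -> Prop) : (exists x, P x) -> P (epick d P).
Proof. rewrite /epick; case: pselect => // H _; exact: proj2_sig (cid H). Qed.

Lemma epick_or {T : Type} (d : T) (P R : T -> Prop) :
  R d -> (forall x, P x -> R x) -> R (epick d P).
Proof. rewrite /epick; case: pselect => // H _ HPR; apply: HPR; exact: proj2_sig (cid H). Qed.

Section General.
Variable AP : eqType.

Lemma map_filter_sub (p : pred (qentry AP)) (l : seq (qentry AP)) q :
  q \in [seq qp e | e <- l & p e] -> q \in [seq qp e | e <- l].
Proof.
elim: l => //= e l IH; case: (p e) => /=; rewrite !in_cons.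
  by case/orP=> [->//|/IH ->]; rewrite orbT.
by move/IH => ->; rewrite orbT.
Qed.

Lemma map_filter_split (p : pred (qentry AP)) (l : seq (qentry AP)) q :
  (q \in [seq qp e | e <- l & p e]) || (q \in [seq qp e | e <- l & ~~ p e]) =
  (q \in [seq qp e | e <- l]).
Proof.
elim: l => //= e l IH; case: (p e) => /=; rewrite !in_cons -IH;
  by case: (q == qp e); rewrite ?orbT.
Qed.

Lemma word_inj (a b : Asg AP) : (forall t, word a t = word b t) -> a = b.
Proof.
move=> H; apply: funext => q.
have Hq t : omap (fun f => f t) (a q) = omap (fun f => f t) (b q).
  by have := congr1 (fun w => w q) (H t).
case Ea: (a q) (Hq 0) => [f|]; case Eb: (b q) => [g|] //= _.
congr Some; apply: funext => t; have := Hq t; rewrite Ea Eb /=; by case.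
Qed.

Lemma incr_le (f : nat -> nat) : (forall k, f k < f k.+1) -> forall i j, i <= j -> f i <= f j.
Proof.
move=> hf i j hij; rewrite -(subnKC hij); elim: (j - i) => [|d IH]; first by rewrite addn0.
by rewrite addnS (leq_trans IH) // ltnW.
Qed.

Lemma incr_lt (f : nat -> nat) : (forall k, f k < f k.+1) -> forall i j, f i < f j -> i < j.
Proof.
move=> hf i j h; rewrite ltnNge; apply/negP => hji.
by have := incr_le hf hji; rewrite leqNgt h.
Qed.

Lemma enum_uniq (O : nat -> Prop) (f g : nat -> nat) :
  (forall k, f k < f k.+1) -> (forall k, g k < g k.+1) ->
  (forall k, O (f k)) -> (forall k, O (g k)) ->
  (forall j, O j -> exists k, f k = j) -> (forall j, O j -> exists k, g k = j) ->
  forall t, f t = g t.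
Proof.
move=> hf hg Of Og Hf Hg; elim => [|t IH].
  have [k fk] := Hf _ (Og 0); have [k' gk'] := Hg _ (Of 0).
  apply/eqP; rewrite eqn_leq; apply/andP; split.
    by rewrite -fk incr_le.
  by rewrite -gk' incr_le.
have [k gk] := Hg _ (Of t.+1); have [k' fk'] := Hf _ (Og t.+1).
have h1 : t < k by apply: (incr_lt hg); rewrite gk -IH.
have h2 : t < k' by apply: (incr_lt hf); rewrite fk' IH.
apply/eqP; rewrite eqn_leq; apply/andP; split.
  by rewrite -fk' incr_le.
by rewrite -gk incr_le.
Qed.

Definition ext_val (v : valuation AP) (p : AP) (b : bool) : valuation AP :=
  fun q => if q == p then Some b else v q.

Lemma dom_ext_val v p b : dom (ext_val v p b) = dom v `|` [set p].
Proof.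
apply/seteqP; split => q; rewrite /dom /ext_val /=.
  by case: eqP => [->|_] H; [right | left].
case: eqP => [_ _ //|ne [//|/= qp]]; by case: ne.
Qed.

Lemma modMD t m d : m < d.+1 -> (t * d.+1 + m) %% d.+1 = m /\ (t * d.+1 + m) %/ d.+1 = t.
Proof. by move=> h; rewrite modnMDl modn_small // divnMDl // divn_small ?addn0. Qed.

Lemma modS_lt k d : k %% d.+1 < d ->
  k.+1 %% d.+1 = (k %% d.+1).+1 /\ k.+1 %/ d.+1 = k %/ d.+1.
Proof.
move=> h; have E := divn_eq k d.+1.
have E1 : k.+1 = k %/ d.+1 * d.+1 + (k %% d.+1).+1 by rewrite {1}E addnS.
by rewrite E1; apply: modMD.
Qed.

Lemma modS_eq k d : k %% d.+1 = d ->
  k.+1 %% d.+1 = 0 /\ k.+1 %/ d.+1 = (k %/ d.+1).+1.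
Proof.
move=> h; have E := divn_eq k d.+1.
have E1 : k.+1 = (k %/ d.+1).+1 * d.+1 by rewrite {1}E h mulSnr addnS.
by rewrite E1 modnMl mulnK.
Qed.

Definition meets (X A : set (Asg AP)) := exists y, X y /\ A y.
Definition imgAll (A : set (Asg AP)) p := [set y | exists a f, A a /\ y = upd a p f].
Definition imgF (A : set (Asg AP)) p (F : functor AP) := [set y | exists a, A a /\ y = upd a p (F a)].

Lemma meets_mono X A B : meets X A -> A `<=` B -> meets X B.
Proof. by move=> [y [Xy Ay]] AB; exists y; split => //; apply: AB. Qed.

Lemma S1 P sg HX X A p F : HX X -> X `<=` A -> Fnc_sigma P sg F ->
  ext_sigma P sg HX p (ext_set X F p) /\ ext_set X F p `<=` imgF A p F.
Proof.
move=> hX XA hF; split; first by exists X, F.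
by move=> y [a Xa <-]; exists a; split => //; exact: XA.
Qed.

Lemma S2 P sg HX X A p : HX X -> X `<=` A ->
  exists Y, dual (ext_sigma P sg (dual HX) p) Y /\ Y `<=` imgAll A p.
Proof.
move=> hX XA.
pose c := fun W : set (Asg AP) => epick (@empty_asg AP) (fun y => W y /\ imgAll A p y).
have hc : forall W, ext_sigma P sg (dual HX) p W -> W (c W) /\ imgAll A p (c W).
  move=> W [Z [F [[c0 [hc0 EZ]] [_ EW]]]]; rewrite /c; apply: (@epickP _ (@empty_asg AP) (fun y => W y /\ imgAll A p y)).
  exists (upd (c0 X) p (F (c0 X))); rewrite EW; split.
    by exists (c0 X) => //; rewrite EZ; exists X.
  exists (c0 X), (F (c0 X)); split => //; apply: XA; exact: hc0.
exists (c @` ext_sigma P sg (dual HX) p); split.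
  by exists c; split => // W hW; exact: (hc W hW).1.
by move=> y [W hW <-]; exact: (hc W hW).2.
Qed.

Lemma S3 P sg HX A p : (forall X, HX X -> meets X A) ->
  forall Y, ext_sigma P sg HX p Y -> meets Y (imgAll A p).
Proof.
move=> H Y [X [F [hX [_ ->]]]]; have [a [Xa Aa]] := H X hX.
by exists (upd a p (F a)); split; [exists a | exists a, (F a)].
Qed.

Lemma S4 P sg HX A p G : (forall X, HX X -> meets X A) -> Fnc_sigma P sg G ->
  forall Y, dual (ext_sigma P sg (dual HX) p) Y -> meets Y (imgF A p G).
Proof.
move=> H hG Y [c [hc ->]].
pose c0 := fun X : set (Asg AP) => epick (@empty_asg AP) (fun y => X y /\ A y).
have hc0 : forall X, HX X -> X (c0 X) /\ A (c0 X) by move=> X hX; rewrite /c0; apply: (@epickP _ (@empty_asg AP) (fun y => X y /\ A y)); exact: H.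
pose Z := c0 @` HX.
have hZ : dual HX Z by exists c0; split => // X hX; exact: (hc0 X hX).1.
pose W := ext_set Z G p.
have hW : ext_sigma P sg (dual HX) p W by exists Z, G.
exists (c W); split; first by exists W.
have [z [X hX Ez] Ecw] := hc W hW.
exists z; split; first by rewrite -Ez; exact: (hc0 X hX).2.
by rewrite Ecw.
Qed.

Lemma evl_from_cat a P HX (l1 l2 : qprefix AP) : evl_from a P HX (l1 ++ l2) =
  evl_from a (foldl (fun P e => P `|` [set qp e]) P l1) (evl_from a P HX l1) l2.
Proof.
elim: l1 P HX => [//|e l IH] P HX.
exact: IH.
Qed.

Lemma foldl_sub P (l : qprefix AP) : P `<=` foldl (fun P e => P `|` [set qp e]) P l.
Proof.
elim: l P => [|e l IH] P q Pq //=.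
by apply: IH; left.
Qed.

Lemma foldl_mem P (l : qprefix AP) q : q \in [seq qp e | e <- l] ->
  foldl (fun P e => P `|` [set qp e]) P l q.
Proof.
elim: l P => [//|e l IH] P /=; rewrite in_cons => /orP [/eqP ->|/IH //].
by apply: foldl_sub; right.
Qed.

End General.

Section Game.
Variable AP : eqType.
Variable pre : qprefix AP.
Variable x0 : AP.
Variable Psi : set (Asg AP).
Hypothesis U : uniq [seq qp e | e <- pre].

Local Notation ps := [seq qp e | e <- pre].
Local Notation n := (size pre).
Local Notation e0 := (QE QEx (specB AP) x0).
Local Notation G := (qgame pre Psi).
Local Notation qinit0 := (qinit pre).
Local Notation lst := (last (qinit pre)).

Lemma size_ps : size ps = n. Proof. by rewrite size_map. Qed.

Lemma notin_take m : m < n -> nth x0 ps m \notin take m ps.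
Proof.
move=> hm; have := take_uniq m.+1 U.
by rewrite (take_nth x0) ?size_ps // rcons_uniq; case/andP.
Qed.

Lemma in_take m m' : m < m' -> m < n -> nth x0 ps m \in take m' ps.
Proof.
move=> h1 h2; rewrite -(nth_take x0 h1); apply: mem_nth.
by rewrite size_take size_ps; case: ifP.
Qed.

Lemma dp_inj m m' : m <= n -> m' <= n -> dom_prefix pre m = dom_prefix pre m' -> m = m'.
Proof.
move=> hm hm' E.
have key : forall a b, a <= n -> b <= n -> dom_prefix pre a = dom_prefix pre b -> ~ a < b.
  move=> a b ha hb Eab lt.
  have : dom_prefix pre b (nth x0 ps a) by rewrite /dom_prefix /= in_take // (leq_trans lt).
  rewrite -Eab /dom_prefix /= => H.
  by have := notin_take (leq_trans lt hb); rewrite H.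
apply/eqP; rewrite eqn_leq; apply/andP; split; rewrite leqNgt; apply/negP.
  exact: (key m' m hm' hm (esym E)).
exact: (key m m' hm hm' E).
Qed.

Lemma dp_n : dom_prefix pre n = ap pre.
Proof. by rewrite /dom_prefix /ap take_oversize // size_ps. Qed.

Lemma dp_0 : dom_prefix pre 0 = set0.
Proof. by rewrite /dom_prefix take0; apply/seteqP; split => q. Qed.

Lemma dp_S m : m < n -> dom_prefix pre m.+1 = dom_prefix pre m `|` [set nth x0 ps m].
Proof.
move=> hm; rewrite /dom_prefix (take_nth x0) ?size_ps //.
apply/seteqP; split => q /=; rewrite mem_rcons in_cons.
  by case/orP => [/eqP ->|->]; [right|left].
by case => [->|->]; rewrite ?eqxx ?orbT.
Qed.

Lemma qpos_dom (v : qpos pre) : exists m, m <= n /\ dom (sval v) = dom_prefix pre m.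
Proof. exact: (proj2_sig v). Qed.

Lemma dom_None (v : valuation AP) D q : dom v = D -> ~ D q -> v q = None.
Proof. by move=> <-; rewrite /dom /=; case: (v q) => // b H; exfalso; apply: H. Qed.

Lemma dom_Some (v : valuation AP) D q : dom v = D -> D q -> v q <> None.
Proof. by move=> <-. Qed.

Definition ext_qpos (v : qpos pre) m (b : bool) (h : dom (sval v) = dom_prefix pre m) (hm : m < n) : qpos pre.
Proof.
exists (ext_val (sval v) (nth x0 ps m) b); exists m.+1; split => //.
by rewrite dom_ext_val h dp_S.
Defined.

Lemma move_ext (v v' : qpos pre) m b : dom (sval v) = dom_prefix pre m -> m < n ->
  sval v' = ext_val (sval v) (nth x0 ps m) b -> qmove v v'.
Proof.
move=> h hm E; left; exists m; split => //; split => //; split.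
  by rewrite E dom_ext_val h dp_S.
move=> p hp; rewrite E /ext_val; case: eqP => // ep.
have : dom_prefix pre m p by rewrite -h.
by rewrite /dom_prefix /= ep (negbTE (notin_take hm)).
Qed.

Lemma move_reset (v : qpos pre) : dom (sval v) = ap pre -> qmove v qinit0.
Proof. move=> h; right; split => //; apply/seteqP; split => q //=. Qed.

Lemma succ_ex (v : qpos pre) : exists v', qmove v v'.
Proof.
have [m [hm h]] := qpos_dom v.
case: (ltnP m n) => hmn.
  by exists (ext_qpos true h hmn); apply: (move_ext (b:=true) h hmn).
have Emn : m = n by apply/eqP; rewrite eqn_leq hm.
by exists qinit0; apply: move_reset; rewrite h Emn dp_n.
Qed.

Lemma move_inv (v v' : qpos pre) m : m <= n -> dom (sval v) = dom_prefix pre m -> qmove v v' ->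
  (m < n /\ dom (sval v') = dom_prefix pre m.+1 /\
     (forall p, sval v p <> None -> sval v' p = sval v p)) \/
  (m = n /\ dom (sval v') = set0).
Proof.
move=> hm h [[m' [hm' [h1 [h2 h3]]]]|[h1 h2]].
  have E : m = m' by apply: dp_inj => //; [exact: ltnW | rewrite -h -h1].
  by subst; left.
right; split => //; apply: dp_inj => //; by rewrite -h h1 dp_n.
Qed.

Lemma ohead_drop (s : seq (qentry AP)) m : m < size s -> ohead (drop m s) = Some (nth e0 s m).
Proof. by move=> h; rewrite (drop_nth e0 h). Qed.

Lemma owner (v : qpos pre) m : m <= n -> dom (sval v) = dom_prefix pre m ->
  qEloise v = (m < n) && quant_eqb (qq (nth e0 pre m)) QEx.
Proof.
move=> hm h; rewrite /qEloise.
case E: ((m < n) && _).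
  apply/asboolP; exists m, (nth e0 pre m); split => //; split.
    by apply: ohead_drop; case/andP: E.
  by case/andP: E => _; case: (qq _).
apply/asboolP => -[m' [e [h1 [h2 h3]]]].
have hm' : m' < n.
  by rewrite ltnNge; apply/negP => hh; rewrite drop_oversize in h2.
have Em : m = m' by apply: dp_inj => //; [exact: ltnW | rewrite -h -h1].
subst; rewrite ohead_drop // in h2; case: h2 => h2.
by move: E; rewrite hm' h2 h3.
Qed.

Definition mixp (sE sA : seq (qpos pre) -> qpos pre) (h : seq (qpos pre)) : qpos pre :=
  if qEloise (lst h) then sE h else sA h.

Fixpoint hist (sg : seq (qpos pre) -> qpos pre) k : seq (qpos pre) :=
  match k with
  | 0 => [:: qinit0]
  | k'.+1 => rcons (hist sg k') (sg (hist sg k'))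
  end.

Definition pos sg k := lst (hist sg k).

Lemma induced_eq sE sA k : @induced_hist G sE sA k = hist (mixp sE sA) k.
Proof. by elim: k => //= k ->. Qed.

Lemma size_hist sg k : size (hist sg k) = k.+1.
Proof. by elim: k => //= k IH; rewrite size_rcons IH. Qed.

Lemma pos_succ sg k : pos sg k.+1 = sg (hist sg k).
Proof. by rewrite /pos /= last_rcons. Qed.

Definition valid (sg : seq (qpos pre) -> qpos pre) :=
  forall h, @history G h -> qmove (lst h) (sg h).

Lemma histS sg k : hist sg k.+1 = rcons (hist sg k) (sg (hist sg k)).
Proof. by []. Qed.

Lemma hist_history sg : valid sg -> forall k, @history G (hist sg k).
Proof.
move=> V; elim => [|k [ne [hd hm]]].
  by split => //; split => //= i; rewrite ltnS ltn0.
rewrite histS; have Vh := V _ (conj ne (conj hd hm)).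
move: (hist sg k) ne hd hm Vh => h ne hd hm Vh.
split; first by move/(congr1 size); rewrite size_rcons.
split; first by move: ne hd; case: h {hm Vh} => [ne' _|a l _ /=]; first by case: ne'.
move=> i; rewrite size_rcons => hi.
rewrite !nth_rcons.
case: (ltnP i.+1 (size h)) => hi2.
  by rewrite (ltnW hi2); apply: hm.
have Ei : i.+1 = size h by apply/eqP; rewrite eqn_leq hi2 -ltnS hi.
have -> : nth (ginit G) h i = lst h by rewrite -nth_last -Ei.
rewrite -Ei eqxx ltnSn.
exact: Vh.
Qed.

Lemma dom_pos sg : valid sg -> forall k, dom (sval (pos sg k)) = dom_prefix pre (k %% n.+1).
Proof.
move=> V; elim => [|k IH].
  by rewrite mod0n dp_0; apply/seteqP; split => q /=; [move=> H; apply: H|].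
have hr : k %% n.+1 <= n by rewrite -ltnS ltn_pmod.
have hmv : qmove (pos sg k) (pos sg k.+1) by rewrite pos_succ; exact: (V _ (hist_history V k)).
case: (move_inv hr IH hmv) => [[hlt [h1 _]]|[he h1]].
  by rewrite (modS_lt hlt).1.
by rewrite (modS_eq he).1 dp_0.
Qed.

Definition bit sg k : bool := odflt false (sval (pos sg k.+1) (nth x0 ps (k %% n.+1))).

Lemma vals sg : valid sg -> forall k i, i < k %% n.+1 ->
  sval (pos sg k) (nth x0 ps i) = Some (bit sg (k %/ n.+1 * n.+1 + i)).
Proof.
move=> V; elim => [|k IH] i; first by rewrite mod0n.
have hr : k %% n.+1 <= n by rewrite -ltnS ltn_pmod.
have hmv : qmove (pos sg k) (pos sg k.+1) by rewrite pos_succ; exact: (V _ (hist_history V k)).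
case: (move_inv hr (dom_pos V k) hmv) => [[hlt [h1 h2]]|[he h1]].
  have [E1 E2] := modS_lt hlt.
  rewrite E1 E2 ltnS leq_eqVlt => /orP [/eqP ->|hi].
    rewrite -divn_eq /bit.
    have : sval (pos sg k.+1) (nth x0 ps (k %% n.+1)) <> None.
      apply: (dom_Some h1); rewrite dp_S // /=; by right.
    by case: (sval _ _).
  by rewrite h2 (IH i hi) //; rewrite IH.
by rewrite (modS_eq he).1.
Qed.

Lemma obs_pos sg : valid sg -> forall k, qobs (pos sg k) <-> k %% n.+1 = n.
Proof.
move=> V k; rewrite /qobs dom_pos // -dp_n; split; last by move->.
apply: dp_inj; last by [].
by rewrite -ltnS ltn_pmod.
Qed.

Definition playasg sg : Asg AP :=
  fun q => if q \in ps then Some (fun t => bit sg (t * n.+1 + index q ps)) else None.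

Lemma word_pos sg : valid sg -> forall t, sval (pos sg (t * n.+1 + n)) = word (playasg sg) t.
Proof.
move=> V t; apply: funext => q; rewrite /word /playasg.
have [Em Ed] := modMD t (ltnSn n).
case: ifP => qin.
  have hi : index q ps < n by rewrite -size_ps index_mem.
  by rewrite -{1}(nth_index x0 qin) (vals V) ?Em // Ed.
apply: (dom_None (dom_pos V _)); rewrite Em dp_n /ap /= qin; by [].
Qed.

Lemma win_iff sg : valid sg -> (@obs_in_W G (pos sg) <-> Psi (playasg sg)).
Proof.
move=> V; pose g := fun t => t * n.+1 + n.
have gi : forall k, g k < g k.+1 by move=> k; rewrite /g ltn_add2r ltn_mul2r ltnSn.
have go : forall k, qobs (pos sg (g k)) := fun k => (obs_pos V _).2 (modMD k (ltnSn n)).1.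
have gh : forall j, qobs (pos sg j) -> exists k, g k = j.
  by move=> j /(obs_pos V) hj; exists (j %/ n.+1); rewrite /g; apply/esym; rewrite {1}(divn_eq j n.+1) hj.
split.
  move=> [o [[f [fi [fo [fh fe]]]] [chi [Pchi Hw]]]].
  have Efg := @enum_uniq (fun j => qobs (pos sg j)) f g fi gi fo go fh gh.
  suff -> : playasg sg = chi by [].
  by apply: word_inj => t; rewrite -word_pos // -Hw fe Efg.
move=> Ps; exists (fun t => pos sg (g t)); split.
  by exists g; split => //; split => //; split.
by exists (playasg sg); split => // t; exact: word_pos.
Qed.


Variable pl : bool.
Local Notation Qpl := (if pl then QEx else QAll).

Definition isQ m := quant_eqb (qq (nth e0 pre m)) Qpl.

Definition bitS (a : Asg AP) m t : bool :=
  if (m < n) && isQ m then odflt false (omap (fun f => f t) (a (nth x0 ps m))) else false.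

Definition specS (a : Asg AP) (h : seq (qpos pre)) (v' : qpos pre) : Prop :=
  (size h).-1 %% n.+1 < n ->
  sval v' (nth x0 ps ((size h).-1 %% n.+1)) =
    Some (bitS a ((size h).-1 %% n.+1) ((size h).-1 %/ n.+1)).

Definition scripted (a : Asg AP) (h : seq (qpos pre)) : qpos pre :=
  epick (epick qinit0 (qmove (lst h))) (fun v' => qmove (lst h) v' /\ specS a h v').

Lemma scripted_move a h : qmove (lst h) (scripted a h).
Proof. apply: epick_or; last by move=> x []. exact: epickP (succ_ex _). Qed.

Variable s : seq (qpos pre) -> qpos pre.

Definition prof a := if pl then mixp (scripted a) s else mixp s (scripted a).

Lemma prof_apply a h : prof a h = if qEloise (lst h) == pl then scripted a h else s h.
Proof. by rewrite /prof /mixp; case: pl; case: (qEloise _). Qed.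

Lemma prof_valid a : @strategy G (~~ pl) s -> valid (prof a).
Proof.
move=> Hs h hh; rewrite /prof /mixp; case Epl: pl Hs => Hs;
  case E: (qEloise (lst h)); try apply: scripted_move; by apply: Hs.
Qed.

Lemma bit_script a k : @strategy G (~~ pl) s -> k %% n.+1 < n -> isQ (k %% n.+1) ->
  bit (prof a) k = bitS a (k %% n.+1) (k %/ n.+1).
Proof.
move=> Hs hr hQ; have V := prof_valid a Hs.
have D := dom_pos V k.
have Own := owner (ltnW hr) D.
have Esc : prof a (hist (prof a) k) = scripted a (hist (prof a) k).
  rewrite prof_apply; change (lst (hist (prof a) k)) with (pos (prof a) k).
  rewrite Own hr /=; move: hQ; rewrite /isQ; case: pl; by case: (qq _).
have Hex : exists v', qmove (lst (hist (prof a) k)) v' /\ specS a (hist (prof a) k) v'.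
  exists (ext_qpos (bitS a (k %% n.+1) (k %/ n.+1)) D hr); split.
    exact: (move_ext D hr).
  by rewrite /specS size_hist /= /ext_val eqxx.
have [_ Hsp] := epickP (epick qinit0 (qmove (lst (hist (prof a) k)))) Hex.
rewrite /bit pos_succ Esc; move: Hsp; rewrite /specS size_hist /= => Hsp.
by rewrite /scripted /specS size_hist /= (Hsp hr).
Qed.

Lemma bit_dep a1 a2 k :
  (forall k', k' <= k -> bitS a1 (k' %% n.+1) (k' %/ n.+1) = bitS a2 (k' %% n.+1) (k' %/ n.+1)) ->
  bit (prof a1) k = bit (prof a2) k.
Proof.
move=> H.
have Eh : forall j, j <= k.+1 -> hist (prof a1) j = hist (prof a2) j.
  elim => [//|j IH] hj; rewrite !histS -IH ?(ltnW hj) //.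
  have Hsc : scripted a1 (hist (prof a1) j) = scripted a2 (hist (prof a1) j).
    by rewrite /scripted /specS size_hist /= H.
  by rewrite !prof_apply Hsc.
by rewrite /bit /pos Eh.
Qed.

Definition Fq (q : AP) (a : Asg AP) : nat -> bool := fun t => bit (prof a) (t * n.+1 + index q ps).

Lemma Fq_dep q a1 a2 : (forall m, m < n -> isQ m -> a1 (nth x0 ps m) = a2 (nth x0 ps m)) ->
  Fq q a1 = Fq q a2.
Proof.
move=> H; apply: funext => t; apply: bit_dep => k' _; rewrite /bitS.
by case: ifP => // /andP [h1 h2]; rewrite H.
Qed.

Lemma Fq_fnc P S q : q \in ps -> (forall m, m < n -> isQ m -> P (nth x0 ps m)) ->
  (forall p, S p -> p \in ps -> index q ps < index p ps) ->
  Fnc_sigma P (spec_union (specB AP) (set0, S)) (Fq q).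
Proof.
move=> qin HP HS.
have hj : index q ps < n by rewrite -size_ps index_mem.
have hj1 : index q ps < n.+1 by apply: (leq_trans hj (leqnSn n)).
split => p Sp Pp K c1 c2 _ _ [Ho Hp]; apply: bit_dep => k' hk'; rewrite /bitS;
  case: ifP => // /andP [hm hQ];
  (case: (eqVneq (nth x0 ps (k' %% n.+1)) p) => [Ep|Ne];
    last by rewrite Ho //; [apply: HP | apply/eqP]); rewrite Ep Hp //.
  by have := leq_div2r n.+1 hk'; rewrite (modMD K hj1).2.
case: Sp => // Sp.
have pin : p \in ps by rewrite -Ep mem_nth // size_ps.
have := HS p Sp pin; rewrite -Ep index_uniq ?size_ps // => hlt.
rewrite ltnNge; apply/negP => hK.
have := leq_mul2r n.+1 K (k' %/ n.+1); rewrite hK orbT => hM.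
have E := divn_eq k' n.+1.
move: hM E hlt hk'; move: (K * n.+1) (k' %/ n.+1 * n.+1) (k' %% n.+1) => A B C; lia.
Qed.


Definition Good (D : set AP) (y : Asg AP) : Prop :=
  (forall q, y q = None <-> ~ D q) /\
  (forall m, m < n -> ~~ isQ m -> D (nth x0 ps m) -> y (nth x0 ps m) = Some (Fq (nth x0 ps m) y)).

Lemma Good_ext D1 D2 y : (forall q, D1 q <-> D2 q) -> Good D1 y -> Good D2 y.
Proof.
move=> HD [H1 H2]; split.
  by move=> q; rewrite H1; split => H hq; apply: H; apply/HD.
by move=> m hm hQ /HD; apply: H2.
Qed.

Lemma nth_inj m m' : m < n -> m' < n -> nth x0 ps m = nth x0 ps m' -> m = m'.
Proof.
move=> hm hm' E.
have hm1 : m < size ps by rewrite size_ps.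
by rewrite -(index_uniq x0 hm1 U) E index_uniq // size_ps.
Qed.

Lemma upd_None D (a : Asg AP) p f : (forall q, a q = None <-> ~ D q) ->
  forall q, upd a p f q = None <-> ~ (D `|` [set p]) q.
Proof.
move=> H1 q; rewrite /upd; case: eqP => [->|ne].
  by split => // H; exfalso; apply: H; right.
rewrite H1; split => H.
  by case => // /ne.
by move=> Dq; apply: H; left.
Qed.

Lemma GS1 D a m0 f : Good D a -> (forall m, m < n -> ~~ isQ m -> ~ D (nth x0 ps m)) ->
  m0 < n -> isQ m0 -> Good (D `|` [set nth x0 ps m0]) (upd a (nth x0 ps m0) f).
Proof.
move=> [H1 H2] HD hm0 hQ; split; first exact: upd_None.
move=> m hm hnQ [Dm|Em]; first by exfalso; apply: (HD m hm hnQ Dm).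
by move: hnQ; rewrite (nth_inj hm hm0 Em) hQ.
Qed.

Lemma GS2 D a m0 : Good D a -> m0 < n -> ~~ isQ m0 ->
  Good (D `|` [set nth x0 ps m0]) (upd a (nth x0 ps m0) (Fq (nth x0 ps m0) a)).
Proof.
move=> [H1 H2] hm0 hnQ0.
have Fd : forall q g, Fq q (upd a (nth x0 ps m0) g) = Fq q a.
  move=> q g; apply: Fq_dep => m hm hQ; rewrite /upd; case: eqP => // E.
  by move: hnQ0; rewrite -(nth_inj hm hm0 E) hQ.
split; first exact: upd_None.
move=> m hm hnQ HDm; rewrite Fd /upd; case: eqP => [->//|ne].
by case: HDm => [Dm|//]; apply: H2.
Qed.

Lemma Good_final y D : @strategy G (~~ pl) s -> Good D y -> (forall q, D q <-> q \in ps) ->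
  y = playasg (prof y).
Proof.
move=> Hs [H1 H2] HD; apply: funext => q; rewrite /playasg; case: ifP => qin; last first.
  by apply/H1; move/HD; rewrite qin.
have hj : index q ps < n by rewrite -size_ps index_mem.
have hj1 : index q ps < n.+1 by apply: (leq_trans hj (leqnSn n)).
have Eq : nth x0 ps (index q ps) = q := nth_index x0 qin.
case hQ: (isQ (index q ps)).
  have : y q <> None by move=> E; exact: ((H1 q).1 E ((HD q).2 qin)).
  case E: (y q) => [f|] // _.
  congr Some; apply: funext => t.
  rewrite bit_script // (modMD t hj1).1 ?(modMD t hj1).2 //.
  by rewrite /bitS hj hQ /= Eq E.
have := H2 _ hj (negbT hQ); rewrite Eq => ->; first by [].
exact/HD.
Qed.

Definition Dq (l : seq (qentry AP)) : set AP := [set q | q \in [seq qp e | e <- l & quant_eqb (qq e) Qpl]].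
Definition Dn (l : seq (qentry AP)) : set AP := [set q | q \in [seq qp e | e <- l & ~~ quant_eqb (qq e) Qpl]].

Lemma filt_nth (p : pred (qentry AP)) (l : seq (qentry AP)) q :
  q \in [seq qp e | e <- l & p e] ->
  exists i, [/\ i < size l, nth x0 [seq qp e | e <- l] i = q & p (nth e0 l i)].
Proof.
elim: l => //= e l IH; case pe: (p e) => /=.
  rewrite in_cons => /orP [/eqP ->|/IH [i [h1 h2 h3]]]; first by exists 0.
  by exists i.+1.
by move/IH => [i [h1 h2 h3]]; exists i.+1.
Qed.

Lemma DqQ m : m < n -> Dq pre (nth x0 ps m) -> isQ m.
Proof.
move=> hm /filt_nth [i [hi Ei hQ]].
by rewrite /isQ (nth_inj hm hi (esym Ei)).
Qed.

Lemma Qprop_in m : m < n -> isQ m -> Dq pre (nth x0 ps m).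
Proof.
rewrite /isQ /Dq /=; elim: pre m => //= e l IH [|m] /= hm hQ.
  by rewrite hQ /= in_cons eqxx.
case: (quant_eqb _ _) => //=; rewrite ?in_cons IH ?orbT //.
Qed.

Lemma Dq_prefix s0 s' q : pre = s0 ++ s' -> Dq s0 q -> Dq pre q.
Proof. by move=> E; rewrite /Dq /= E filter_cat map_cat mem_cat => ->. Qed.

Lemma nth_split s0 e s' : pre = s0 ++ e :: s' ->
  [/\ size s0 < n, nth x0 ps (size s0) = qp e & nth e0 pre (size s0) = e].
Proof.
move=> E; rewrite E size_cat /= map_cat !nth_cat size_map ltnn subnn; split => //.
by rewrite -addSnnS leq_addr.
Qed.

Lemma idx_after s0 e s' p : pre = s0 ++ e :: s' -> p \in [seq qp e | e <- s'] ->
  size s0 < index p ps.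
Proof.
move=> E pin.
have : uniq [seq qp e | e <- s0 ++ e :: s'] by rewrite -E.
rewrite map_cat cat_uniq => /and3P [_ hn hu].
move: hu => /= /andP [hne _].
have pn : p \notin [seq qp e | e <- s0].
  move/hasPn: hn => hn; have := hn p; rewrite in_cons pin orbT; by move/(_ isT).
rewrite E map_cat index_cat (negbTE pn) size_map /=.
case: eqP => [Ep|_]; last by rewrite addnS ltnS leq_addr.
by move: hne; rewrite Ep pin.
Qed.

Lemma Dq_rcons s0 e q : Dq (rcons s0 e) q <->
  (if quant_eqb (qq e) Qpl then Dq s0 q \/ q = qp e else Dq s0 q).
Proof.
rewrite /Dq /= filter_rcons; case: (quant_eqb (qq e) Qpl) => //.
rewrite map_rcons mem_rcons in_cons; split; first by case/orP => [/eqP|]; [right|left].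
by case => [->|->]; rewrite ?eqxx ?orbT.
Qed.

Lemma Dn_rcons s0 e q : Dn (rcons s0 e) q <->
  (if quant_eqb (qq e) Qpl then Dn s0 q else Dn s0 q \/ q = qp e).
Proof.
rewrite /Dn /= filter_rcons; case: (quant_eqb (qq e) Qpl) => //=.
rewrite map_rcons mem_rcons in_cons; split; first by case/orP => [/eqP|]; [right|left].
by case => [->|->]; rewrite ?eqxx ?orbT.
Qed.

Lemma coh_flip q a : quant_eqb q Qpl = false -> coherent q a = ~~ coherent Qpl a.
Proof. by case: pl; case: q; case: a. Qed.


Lemma iff_refl' (A : Prop) : A <-> A. Proof. by []. Qed.

Lemma B1a a : coherent Qpl a = false -> forall s' s0, pre = s0 ++ s' ->
  forall P HX X, HX X -> X `<=` Good (Dq s0) ->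
  exists Y, evl_from a P HX [seq QE Qpl (specB AP) (qp e) | e <- s' & quant_eqb (qq e) Qpl] Y /\
    Y `<=` Good (Dq pre).
Proof.
move=> hc; elim => [|e s' IH] s0 E P HX X hX XG.
  by exists X; split => // y /XG; apply: Good_ext => q; rewrite E cats0.
have E' : pre = rcons s0 e ++ s' by rewrite E cat_rcons.
have [hsz Enth Ee] := nth_split E.
have HD : forall m, m < n -> ~~ isQ m -> ~ Dq s0 (nth x0 ps m).
  by move=> m hm hQ /(Dq_prefix E) /(DqQ hm); apply/negP.
rewrite /=; case hQe: (quant_eqb (qq e) Qpl) => /=.
  rewrite /evl_step /= hc.
  have [Y1 [hY1 Y1s]] := S2 P (specB AP) (qp e) hX XG.
  apply: (IH _ E' _ _ _ hY1).
  move=> y /Y1s [a0 [f [Ga0 ->]]]; rewrite -Enth.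
  have hQ : isQ (size s0) by rewrite /isQ Ee hQe.
  apply: Good_ext (GS1 f Ga0 HD hsz hQ) => q.
  by rewrite (propext (Dq_rcons s0 e q)) hQe Enth.
apply: (IH _ E' P HX X hX) => y /XG; apply: Good_ext => q.
by rewrite (propext (Dq_rcons s0 e q)) hQe.
Qed.

Lemma B1b a : coherent Qpl a = true -> forall s' s0, pre = s0 ++ s' ->
  forall P HX, (forall X, HX X -> meets X (Good (Dq s0))) ->
  forall Y, evl_from a P HX [seq QE Qpl (specB AP) (qp e) | e <- s' & quant_eqb (qq e) Qpl] Y ->
    meets Y (Good (Dq pre)).
Proof.
move=> hc; elim => [|e s' IH] s0 E P HX HM Y.
  by move=> /HM hY; apply: (meets_mono hY) => y; apply: Good_ext => q; rewrite E cats0.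
have E' : pre = rcons s0 e ++ s' by rewrite E cat_rcons.
have [hsz Enth Ee] := nth_split E.
have HD : forall m, m < n -> ~~ isQ m -> ~ Dq s0 (nth x0 ps m).
  by move=> m hm hQ /(Dq_prefix E) /(DqQ hm); apply/negP.
rewrite /=; case hQe: (quant_eqb (qq e) Qpl) => /=.
  rewrite /evl_step /= hc.
  apply: (IH _ E') => X hX.
  apply: (meets_mono (S3 HM hX)) => y [a0 [f [Ga0 ->]]]; rewrite -Enth.
  have hQ : isQ (size s0) by rewrite /isQ Ee hQe.
  apply: Good_ext (GS1 f Ga0 HD hsz hQ) => q.
  by rewrite (propext (Dq_rcons s0 e q)) hQe Enth.
apply: (IH _ E') => X /HM hm; apply: (meets_mono hm) => y; apply: Good_ext => q.
by rewrite (propext (Dq_rcons s0 e q)) hQe.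
Qed.

Lemma Fq_fnc_step s0 e s' P : pre = s0 ++ e :: s' ->
  (forall m, m < n -> isQ m -> P (nth x0 ps m)) ->
  Fnc_sigma P (spec_union (specB AP) (set0, props_after Qpl s')) (Fq (qp e)).
Proof.
move=> E HP; have [hsz Enth Ee] := nth_split E.
apply: Fq_fnc => //; first by rewrite -Enth mem_nth // size_ps.
move=> p Sp pin; rewrite -Enth index_uniq ?size_ps //; apply: (idx_after E).
exact: (map_filter_sub Sp).
Qed.

Lemma B2a a : coherent Qpl a = false -> forall s' s0, pre = s0 ++ s' ->
  forall P HX X, (forall m, m < n -> isQ m -> P (nth x0 ps m)) -> HX X ->
  X `<=` Good (Dq pre `|` Dn s0) ->
  exists Y, evl_from a P HX (canon_rest Qpl s') Y /\ Y `<=` Good (Dq pre `|` Dn pre).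
Proof.
move=> hc; elim => [|e s' IH] s0 E P HX X HP hX XG.
  by exists X; split => // y /XG; apply: Good_ext => q; rewrite E cats0.
have E' : pre = rcons s0 e ++ s' by rewrite E cat_rcons.
have [hsz Enth Ee] := nth_split E.
rewrite /=; case hQe: (quant_eqb (qq e) Qpl) => /=.
  apply: (IH _ E' P HX X HP hX) => y /XG; apply: Good_ext => q /=.
  by rewrite (propext (Dn_rcons s0 e q)) hQe.
rewrite /evl_step /= (coh_flip a hQe) hc /=.
have hF := Fq_fnc_step E HP.
have [hY1 Y1s] := S1 (qp e) hX XG hF.
apply: (IH _ E' (P `|` [set qp e]) _ _ _ hY1).
  by move=> m hm hQ; left; exact: HP.
move=> y /Y1s [a0 [Ga0 ->]]; rewrite -Enth.
have hQ : ~~ isQ (size s0) by rewrite /isQ Ee hQe.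
apply: Good_ext (GS2 Ga0 hsz hQ) => q.
rewrite /= (propext (Dn_rcons s0 e q)) hQe Enth; tauto.
Qed.

Lemma B2b a : coherent Qpl a = true -> forall s' s0, pre = s0 ++ s' ->
  forall P HX, (forall m, m < n -> isQ m -> P (nth x0 ps m)) ->
  (forall X, HX X -> meets X (Good (Dq pre `|` Dn s0))) ->
  forall Y, evl_from a P HX (canon_rest Qpl s') Y -> meets Y (Good (Dq pre `|` Dn pre)).
Proof.
move=> hc; elim => [|e s' IH] s0 E P HX HP HM Y.
  by move=> /HM hY; apply: (meets_mono hY) => y; apply: Good_ext => q; rewrite E cats0.
have E' : pre = rcons s0 e ++ s' by rewrite E cat_rcons.
have [hsz Enth Ee] := nth_split E.
rewrite /=; case hQe: (quant_eqb (qq e) Qpl) => /=.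
  apply: (IH _ E' P HX HP) => X /HM hm; apply: (meets_mono hm) => y; apply: Good_ext => q /=.
  by rewrite (propext (Dn_rcons s0 e q)) hQe.
rewrite /evl_step /= (coh_flip a hQe) hc /=.
have hF := Fq_fnc_step E HP.
apply: (IH _ E' (P `|` [set qp e])).
  by move=> m hm hQ; left; exact: HP.
move=> X hX; apply: (meets_mono (S4 HM hF hX)) => y [a0 [Ga0 ->]]; rewrite -Enth.
have hQ : ~~ isQ (size s0) by rewrite /isQ Ee hQe.
apply: Good_ext (GS2 Ga0 hsz hQ) => q.
rewrite /= (propext (Dn_rcons s0 e q)) hQe Enth; tauto.
Qed.

End Game.

Section Main.
Variable AP : eqType.

Lemma Good_empty (pre : qprefix AP) x0 pl (s : seq (qpos pre) -> qpos pre) : Good x0 pl s (Dq pl [::]) (@empty_asg AP).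
Proof. by split; [move=> q; split => // _; rewrite /Dq | move=> m _ _]. Qed.

Lemma strat_scripted (pre : qprefix AP) (Psi : set (Asg AP)) x0 (U : uniq [seq qp e | e <- pre]) pl b y :
  @strategy (qgame pre Psi) b (scripted x0 pl y).
Proof. by move=> h _ _; exact: scripted_move. Qed.

Lemma induced_pos (pre : qprefix AP) (Psi : set (Asg AP)) sE sA :
  @induced_play (qgame pre Psi) sE sA = pos (mixp sE sA).
Proof. by apply: funext => k; rewrite /induced_play induced_eq. Qed.

Lemma main_gen (pre : qprefix AP) (Psi : set (Asg AP)) (x0 : AP) :
  uniq [seq qp e | e <- pre] ->
  (Eloise_wins (qgame pre Psi) ->
     exists E, evl AltEA (C_AE pre) E /\ E `<=` Psi) /\
  (Abelard_wins (qgame pre Psi) ->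
     forall E, evl AltEA (C_EA pre) E -> ~ (E `<=` Psi)).
Proof.
move=> U.
have HDall : forall pl q, (Dq pl pre `|` Dn pl pre) q <-> q \in [seq qp e | e <- pre].
  by move=> pl q; rewrite -(map_filter_split (fun e => quant_eqb (qq e) (if pl then QEx else QAll))); split => [[]->|/orP []]; rewrite ?orbT //; [left|right].
split.
  move=> [sE [HsE Hwin]].
  have hc : coherent (if false then QEx else QAll) AltEA = false by [].
  rewrite /evl /C_AE /canon evl_from_cat.
  have hX : [set [set @empty_asg AP]] [set @empty_asg AP] by [].
  have XG : [set @empty_asg AP] `<=` Good x0 false sE (Dq false [::]).
    by move=> y ->; exact: Good_empty.
  have [Y1 [hY1 Y1G]] := B1a U (pl:=false) (s:=sE) hc (erefl _ : pre = [::] ++ pre) set0 hX XG.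
  have [Y [hY YG]] : exists Y, evl_from AltEA
      (foldl (fun P e => P `|` [set qp e]) set0
         [seq QE QAll (specB AP) (qp e) | e <- pre & quant_eqb (qq e) QAll])
      (evl_from AltEA set0 [set [set @empty_asg AP]]
         [seq QE QAll (specB AP) (qp e) | e <- pre & quant_eqb (qq e) QAll])
      (canon_rest QAll pre) Y /\ Y `<=` Good x0 false sE (Dq false pre `|` Dn false pre).
    apply: (B2a U (pl:=false) (s:=sE) hc (erefl _ : pre = [::] ++ pre) _ hY1).
      move=> m hm hQ; apply: foldl_mem; rewrite -map_comp; exact: (Qprop_in hm hQ).
    move=> y /Y1G; apply: Good_ext => q /=; rewrite /Dn /=; split => [|[]//]; by left.
  exists Y; split => // y /YG Gy.
  rewrite (Good_final (Psi:=Psi) U (pl:=false) HsE Gy (HDall false)).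
  apply/(win_iff x0 U (prof_valid x0 U (pl:=false) y HsE)).
  by rewrite /prof /= -induced_pos; apply: Hwin; exact: strat_scripted.
move=> [sA [HsA Hlose]] E hE Esub.
have hc : coherent (if true then QEx else QAll) AltEA = true by [].
rewrite /evl /C_EA /canon evl_from_cat in hE.
have HM0 : forall X, [set [set @empty_asg AP]] X -> meets X (Good x0 true sA (Dq true [::])).
  by move=> X ->; exists (@empty_asg AP); split => //; exact: Good_empty.
have M1 := B1b U (pl:=true) (s:=sA) hc (erefl _ : pre = [::] ++ pre) HM0.
have [y [Ey Gy]] : meets E (Good x0 true sA (Dq true pre `|` Dn true pre)).
  apply: (B2b U (pl:=true) (s:=sA) hc (erefl _ : pre = [::] ++ pre) _ _ hE).
    move=> m hm hQ; apply: foldl_mem; rewrite -map_comp; exact: (Qprop_in hm hQ).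
  move=> X /M1 hm; apply: (meets_mono hm) => z; apply: Good_ext => q /=.
  by rewrite /Dn /=; split => [|[]//]; left.
have Ps := Esub y Ey.
rewrite (Good_final (Psi:=Psi) U (pl:=true) HsA Gy (HDall true)) in Ps.
move/(win_iff x0 U (prof_valid x0 U (pl:=true) y HsA)): Ps.
rewrite /prof /= -induced_pos; apply: Hlose; exact: strat_scripted.
Qed.

Lemma qpos_nil (v : qpos (@nil (qentry AP))) : sval v = fun _ => None.
Proof.
have [m [hm h]] := qpos_dom v; apply: funext => q.
apply: (dom_None h); rewrite /dom_prefix /=; case: m {h hm} => //.
Qed.

Lemma dom_nil (v : qpos (@nil (qentry AP))) : dom (sval v) = ap [::].
Proof. rewrite qpos_nil; apply/seteqP; split => q //=; by case. Qed.

Lemma nil_case (Psi : set (Asg AP)) :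
  (Eloise_wins (qgame [::] Psi) ->
     exists E, evl AltEA (C_AE [::]) E /\ E `<=` Psi) /\
  (Abelard_wins (qgame [::] Psi) ->
     forall E, evl AltEA (C_EA [::]) E -> ~ (E `<=` Psi)).
Proof.
have Hs : forall b, @strategy (qgame [::] Psi) b (fun _ => qinit [::]).
  by move=> b h _ _; right; split; [exact: dom_nil | apply/seteqP; split => q //=; case].
split.
  move=> [sE [HsE Hwin]].
  have [o [_ [chi [Pchi Hw]]]] := Hwin _ (Hs false).
  exists [set @empty_asg AP]; split => // y ->.
  suff <- : chi = @empty_asg AP by [].
  apply: funext => q; have := congr1 (fun f => f q) (Hw 0).
  rewrite qpos_nil /word /=; by case: (chi q).
move=> [sA [HsA Hlose]] E hE Esub.
have EE : E = [set @empty_asg AP] by [].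
apply: (Hlose _ (Hs true)).
exists (@induced_play (qgame [::] Psi) (fun _ => qinit [::]) sA); split.
  exists id; split => //; split; first by move=> k; exact: dom_nil.
  by split => // j _; exists j.
exists (@empty_asg AP); split; first by apply: Esub; rewrite EE.
by move=> t; rewrite qpos_nil.
Qed.

End Main.

Theorem mainTheorem15 (AP : eqType) (pre : qprefix AP) (Psi : set (Asg AP)) :
  behavioral_prefix pre ->
  uniq [seq qp e | e <- pre] ->
  Psi `<=` AsgP (ap pre) ->
  Borelian (ap pre) Psi ->
  (Eloise_wins (qgame pre Psi) ->
     exists E, evl AltEA (C_AE pre) E /\ E `<=` Psi) /\
  (Abelard_wins (qgame pre Psi) ->
     forall E, evl AltEA (C_EA pre) E -> ~ (E `<=` Psi)).
Proof.
move=> _ U _ _.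
case: pre U => [|e r] U; first exact: nil_case.
exact: (main_gen Psi (qp e) U).
Qed.
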